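(* Let $A$ be a commutative ring and $\sigma$ a hereditary torsion theory on $A$-modules such that $A$ is totally $\sigma$-artinian. Then every invertible ideal $\mathfrak{a}$ of $A$ belongs to $\mathcal{L}(\sigma)$.
   Context: $\mathcal{L}(\sigma)$ is the Gabriel filter of $\sigma$. $A$ is totally $\sigma$-artinian if for every descending chain of ideals $\mathfrak{a}_1\supseteq\mathfrak{a}_2\supseteq\cdots$ there exist $m$ and $\mathfrak{h}\in\mathcal{L}(\sigma)$ with $\mathfrak{a}_m\mathfrak{h}\subseteq\mathfrak{a}_s$ for all $s\ge m$. Let $T$ be the total ring of fractions of $A$ (localization at the set of regular elements). An ideal $\mathfrak{a}$ is invertible if $\mathfrak{a}(A:\mathfrak{a})=A$, where $(A:\mathfrak{a})=\{x\in T:\mathfrak{a}x\subseteq A\}$. *)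

(* Defs.v *)
From HB Require Import structures.
From mathcomp Require Import all_boot all_order all_algebra.
Set Implicit Arguments. Unset Strict Implicit. Unset Printing Implicit Defensive.
Import GRing.Theory.
Local Open Scope ring_scope.

Definition subI (T : Type) (I J : T -> Prop) : Prop := forall x, I x -> J x.

Definition is_ideal (A : comNzRingType) (I : A -> Prop) : Prop :=
  [/\ I 0, (forall x y, I x -> I y -> I (x + y)) & (forall r x, I x -> I (r * x))].

Definition mulI (A : comNzRingType) (I J : A -> Prop) : A -> Prop :=
  fun x => exists n (a b : 'I_n -> A),
    (forall i, I (a i) /\ J (b i)) /\ x = \sum_(i < n) a i * b i.

Definition capI (A : comNzRingType) (I J : A -> Prop) : A -> Prop :=
  fun x => I x /\ J x.

Definition colonI (A : comNzRingType) (I : A -> Prop) (r : A) : A -> Prop :=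
  fun x => I (x * r).

(* Gabriel filter (Gabriel topology) of ideals, Stenstrom VI.5:
   the Gabriel filters correspond bijectively to hereditary torsion
   theories sigma, via L(sigma) = { a | A/a is sigma-torsion }. *)
Definition gabriel_filter (A : comNzRingType) (L : (A -> Prop) -> Prop) : Prop :=
  (forall I, L I -> is_ideal I) /\
  L (fun _ => True) /\
  (forall I J, L I -> is_ideal J -> subI I J -> L J) /\
  (forall I J, L I -> L J -> L (capI I J)) /\
  (forall I r, L I -> L (colonI I r)) /\
  (forall I J, is_ideal J -> L I -> (forall r, I r -> L (colonI J r)) -> L J).

Definition totally_artinian (A : comNzRingType) (L : (A -> Prop) -> Prop) : Prop :=
  forall a : nat -> (A -> Prop),
    (forall n, is_ideal (a n)) -> (forall n, subI (a n.+1) (a n)) ->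
    exists m (h : A -> Prop), L h /\ forall s, (m <= s)%N -> subI (mulI (a m) h) (a s).

Definition regular (A : comNzRingType) (s : A) : Prop := forall x, s * x = 0 -> x = 0.

(* (T, iota) is the total ring of fractions of A, i.e. the localization
   of A at its regular elements (characterized by its universal data). *)
Definition total_ring_of_fractions (A : comNzRingType) (T : comUnitRingType)
    (iota : {rmorphism A -> T}) : Prop :=
  [/\ (forall s, regular s -> iota s \is a GRing.unit),
      (forall t, exists a s, regular s /\ t = iota a / iota s) &
      (forall a, iota a = 0 -> exists s, regular s /\ s * a = 0)].

Definition frac_colon (A : comNzRingType) (T : comUnitRingType)
    (iota : {rmorphism A -> T}) (I : A -> Prop) : T -> Prop :=
  fun x => forall a, I a -> exists b, iota a * x = iota b.

Definition mulIT (A : comNzRingType) (T : comUnitRingType)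
    (iota : {rmorphism A -> T}) (I : A -> Prop) (X : T -> Prop) : T -> Prop :=
  fun t => exists n (u : 'I_n -> A) (v : 'I_n -> T),
    (forall i, I (u i) /\ X (v i)) /\ t = \sum_(i < n) iota (u i) * v i.

Definition invertible_ideal (A : comNzRingType) (T : comUnitRingType)
    (iota : {rmorphism A -> T}) (I : A -> Prop) : Prop :=
  forall t, mulIT iota I (frac_colon iota I) t <-> exists b, t = iota b.

(* Main.v *)
Require Import Defs.
From mathcomp Require Import all_boot all_order all_algebra.
From mathcomp Require Import ring.
Import GRing.Theory.
Local Open Scope ring_scope.

Fixpoint apow (A : comNzRingType) (T : comUnitRingType)
    (iota : {rmorphism A -> T}) (I : A -> Prop) (n : nat) : A -> Prop :=
  match n with
  | 0 => fun _ => True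
  | n'.+1 => fun x => forall t, frac_colon iota I t ->
       exists b, iota x * t = iota b /\ @apow A T iota I n' b
  end.
Arguments apow {A T} iota I n _.

Lemma sum_ideal (A : comNzRingType) (P : A -> Prop) k (c : 'I_k -> A) :
  is_ideal P -> (forall i, P (c i)) -> P (\sum_(i < k) c i).
Proof.
move=> [P0 PD PM] Hc; elim/big_ind: _ => //.
Qed.

Lemma decomp (A : comNzRingType) (T : comUnitRingType)
    (iota : {rmorphism A -> T}) k (u : 'I_k -> A) (v : 'I_k -> T)
    (P : A -> Prop) (z : T) :
  is_ideal P -> 1 = \sum_(i < k) iota (u i) * v i ->
  (forall i, exists c, iota (u i) * (v i * z) = iota c /\ P c) ->
  exists c, z = iota c /\ P c.
Proof.
move=> HP E H; have [f Hf] := fin_all_exists H.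
exists (\sum_(i < k) f i); split; last by apply: sum_ideal => // i; case: (Hf i).
rewrite rmorph_sum -[z]mul1r E mulr_suml; apply: eq_bigr => i _.
by case: (Hf i) => <- _; rewrite mulrA.
Qed.

Theorem mainTheorem8 (A : comNzRingType) (L : (A -> Prop) -> Prop)
    (T : comUnitRingType) (iota : {rmorphism A -> T}) (I : A -> Prop) :
  gabriel_filter L -> totally_artinian L ->
  total_ring_of_fractions iota ->
  is_ideal I -> invertible_ideal iota I -> L I.
Proof.
move=> [_ [_ [Lup _]]] Hart [_ _ Hker] HI Hinv.
have [k [u [v [Hu E]]]] : mulIT iota I (frac_colon iota I) 1.
  by apply/Hinv; exists 1; rewrite rmorph1.
have inj : forall a b, iota a = iota b -> a = b.
  move=> a b Hab; have : iota (a - b) = 0 by rewrite rmorphB Hab subrr.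
  move/Hker=> [s [Hs Hs0]]; apply/eqP; rewrite -subr_eq0; apply/eqP; exact: Hs.
have Aid : forall n, is_ideal (apow iota I n).
  elim=> [|n [P0 PD PM]]; first by split.
  split.
  - by move=> t _; exists 0; rewrite rmorph0 mul0r.
  - move=> x y Hx Hy t Ht; have [b1 [E1 H1]] := Hx t Ht; have [b2 [E2 H2]] := Hy t Ht.
    by exists (b1 + b2); rewrite !rmorphD mulrDl E1 E2; split => //; apply: PD.
  - move=> r x Hx t Ht; have [b [E1 H1]] := Hx t Ht.
    by exists (r * b); rewrite rmorphM -mulrA E1 rmorphM; split => //; apply: PM.
have Adesc : forall n, subI (apow iota I n.+1) (apow iota I n).
  elim=> [|n IH] x //= Hx t Ht; have [b [E1 H1]] := Hx t Ht.
  by exists b; split => //; apply: IH.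
have IA : forall n y w, I w -> apow iota I n y -> apow iota I n.+1 (w * y).
  move=> n y w Hw Hy t Ht; have [c Hc] := Ht w Hw.
  exists (c * y); split; first by rewrite !rmorphM -Hc; ring.
  by case: (Aid n) => _ _ PM; apply: PM.
have C : forall m x, (forall y, apow iota I m y -> apow iota I m.+1 (y * x)) ->
    apow iota I 1 x.
  elim=> [|m IH] x H; first by have := H 1 Logic.I; rewrite mul1r.
  apply: IH => y Hy t Ht.
  apply: (@decomp _ _ iota _ u v (apow iota I m)); [exact: Aid|exact: E|].
  move=> i; have [HIu Hcv] := Hu i.
  have := H _ (IA _ _ _ HIu Hy) t Ht => -[b [Hb Hb1]].
  have [c [Hc Hc1]] := Hb1 (v i) Hcv.
  by exists c; split => //; rewrite -Hc -Hb !rmorphM; ring.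
have [m [h [Lh Hs]]] := Hart (apow iota I) Aid Adesc.
apply: (Lup h) => // x Hx.
have H1 : apow iota I 1 x.
  apply: (C m) => y Hy; apply: (Hs m.+1 (leqnSn m)).
  exists 1%N, (fun _ => y), (fun _ => x); split => //; by rewrite big_ord1.
have [c [Ec Pc]] : exists c, iota x = iota c /\ I c.
  apply: (@decomp _ _ iota _ u v I) => // i.
  have [HIu Hcv] := Hu i; have [b [Hb _]] := H1 (v i) Hcv.
  exists (u i * b); split; first by rewrite rmorphM -Hb; ring.
  by case: HI => _ _ PM; rewrite mulrC; apply: PM.
by rewrite (inj _ _ Ec).
Qed.
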